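(* Let $n\ge 2$, let $X$ be a real $n\times n$ matrix with $\|X\|=1$, and define the linear map $T:\mathfrak{gl}(n,\mathbb R)\to\mathfrak{gl}(n,\mathbb R)$ by $T(Y)=[X^T,[X,Y]]$. Let $\alpha$ be the maximum eigenvalue of $T$. Then the multiplicity of the eigenvalue $\alpha$ is at least $2$.
   Context: $\mathfrak{gl}(n,\mathbb R)$ is the space of real $n\times n$ matrices with the Frobenius inner product $\langle Y_1,Y_2\rangle=\sum_{i,j}(Y_1)_{ij}(Y_2)_{ij}$, with respect to which $T$ is symmetric (so its eigenvalues are real). $[A,B]=AB-BA$, $X^T$ is the transpose, and $\|X\|^2=\sum_{i,j}x_{ij}^2$. *)

(* Defs.v *)
From HB Require Import structures.
From mathcomp Require Import all_boot all_order all_algebra.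
From mathcomp Require Import all_reals.
Set Implicit Arguments. Unset Strict Implicit. Unset Printing Implicit Defensive.
Import Order.TTheory GRing.Theory Num.Theory.
Local Open Scope ring_scope.

Definition lie_bracket (R : comRingType) (n : nat) (A B : 'M[R]_n) : 'M[R]_n :=
  A *m B - B *m A.

Definition frob_norm2 (R : comRingType) (n : nat) (X : 'M[R]_n) : R :=
  \sum_(i < n) \sum_(j < n) X i j ^+ 2.

Definition opT (R : comRingType) (n : nat) (X : 'M[R]_n) (Y : 'M[R]_n) : 'M[R]_n :=
  lie_bracket X^T (lie_bracket X Y).

(* Matrix of T acting on mxvec-coordinates of gl(n,R) (row-vector convention:
   mxvec Y *m opT_mx X = mxvec (opT X Y)). *)
Definition opT_mx (R : comRingType) (n : nat) (X : 'M[R]_n) : 'M[R]_(n * n) :=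
  lin_mx (opT X).

(* Main.v *)
Require Import Defs.
From HB Require Import structures.
From mathcomp Require Import all_boot all_order all_algebra.
From mathcomp Require Import all_reals.
Import Order.TTheory GRing.Theory Num.Theory.
Local Open Scope ring_scope.

Lemma lbD (R : comRingType) n (A Y Z : 'M[R]_n) a :
  lie_bracket A (a *: Y + Z) = a *: lie_bracket A Y + lie_bracket A Z.
Proof.
by rewrite /lie_bracket mulmxDr mulmxDl -scalemxAr -scalemxAl scalerBr opprD addrACA.
Qed.

Lemma opT_is_linear (R : comRingType) n (X : 'M[R]_n) : linear (opT X).
Proof. by move=> a Y Z; rewrite /opT !lbD. Qed.

Lemma mul_vec_opT (R : comRingType) n (X Y : 'M[R]_n) :
  mxvec Y *m opT_mx X = mxvec (opT X Y).
Proof.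
pose flM := GRing.isLinear.Build _ _ _ _ (opT X) (@opT_is_linear _ _ X).
pose fL : {linear 'M[R]_n -> 'M[R]_n} := HB.pack (opT X) flM.
exact: (mul_vec_lin fL).
Qed.

Lemma memE (R : fieldType) n (X Y : 'M[R]_n) a :
  (mxvec Y <= eigenspace (opT_mx X) a)%MS = (opT X Y == a *: Y).
Proof.
apply/eigenspaceP/eqP; rewrite mul_vec_opT.
  by rewrite -linearZ => /(can_inj mxvecK).
by move=> ->; rewrite linearZ.
Qed.

Lemma rank1_dep (F : fieldType) N (E : 'M[F]_N) (v w : 'rV[F]_N) :
  (\rank E <= 1)%N -> (v <= E)%MS -> (w <= E)%MS -> v != 0 -> exists c, w = c *: v.
Proof.
move=> rE vE wE v0; apply/sub_rVP.
have Ev : (E <= v)%MS.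
  have [_ <-] := mxrank_leqif_sup vE.
  have := mxrankS vE; rewrite rank_rV v0 => h.
  by rewrite eqn_leq rE h.
exact: submx_trans wE Ev.
Qed.

Lemma trAAT0 (R : realDomainType) n (A : 'M[R]_n) : \tr (A *m A^T) = 0 -> A = 0.
Proof.
have -> : \tr (A *m A^T) = \sum_i \sum_j A i j ^+ 2.
  rewrite /mxtrace; apply: eq_bigr => i _; rewrite mxE; apply: eq_bigr => j _.
  by rewrite mxE expr2.
move=> h; apply/matrixP => i j; rewrite mxE.
have h1 := psumr_eq0P (fun i _ => sumr_ge0 _ (fun j _ => sqr_ge0 (A i j))) h.
have h2 := psumr_eq0P (fun j _ => sqr_ge0 (A i j)) (h1 i isT).
by apply/eqP; rewrite -sqrf_eq0 (h2 j isT).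
Qed.

Lemma LE (R : comRingType) n (X Y : 'M[R]_n) a :
  opT X Y = a *: Y -> opT X (lie_bracket X Y)^T = a *: (lie_bracket X Y)^T.
Proof.
move=> HY.
have h : lie_bracket X (lie_bracket X Y)^T = - (opT X Y)^T.
  rewrite /opT /lie_bracket !(mulmxBr, mulmxBl, linearB) /= !trmx_mul !trmxK !mulmxA !opprK. by rewrite addrC.
rewrite /opT h HY linearZ /=.
rewrite /lie_bracket mulmxN mulNmx -scalemxAr -scalemxAl linearB /= !trmx_mul.
by rewrite scalerBr opprK addrC.
Qed.

Lemma Lskew (R : comRingType) n (X Y : 'M[R]_n) :
  \tr ((lie_bracket X Y)^T *m Y^T) = 0.
Proof.
rewrite -trmx_mul mxtrace_tr /lie_bracket mulmxBr raddfB /=.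
by rewrite (mxtrace_mulC Y (Y *m X)) mulmxA subrr.
Qed.

Theorem mainTheorem6 (R : realType) (n : nat) (X : 'M[R]_n) (alpha : R) :
  (2 <= n)%N ->
  frob_norm2 X = 1 ->
  eigenvalue (opT_mx X) alpha ->
  (forall a : R, eigenvalue (opT_mx X) a -> a <= alpha) ->
  (2 <= \rank (eigenspace (opT_mx X) alpha))%N.
Proof.
case: n X => [|[|k]] X // _ _ hev _.
rewrite leqNgt; apply/negP => rE.
have {}rE : (\rank (eigenspace (opT_mx X) alpha) <= 1)%N by [].
have [v Hv v0] := eigenvalueP hev.
have vE : (v <= eigenspace (opT_mx X) alpha)%MS by apply/eigenspaceP.
move: vE v0; rewrite -[v]vec_mxK; set Y := vec_mx v => vE v0.
have HY : opT X Y = alpha *: Y by apply/eqP; rewrite -memE.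
have Y0 : Y != 0 by apply: contra v0 => /eqP ->; rewrite linear0.
have dep : forall Z W : 'M[R]_k.+2, (mxvec Z <= eigenspace (opT_mx X) alpha)%MS ->
    (mxvec W <= eigenspace (opT_mx X) alpha)%MS -> Z != 0 -> exists c, W = c *: Z.
  move=> Z W ZE WE Z0.
  have [|c hc] := @rank1_dep _ _ _ _ _ rE ZE WE; first by rewrite mxvec_eq0.
  by exists c; apply: (can_inj mxvecK); rewrite linearZ.
have one0 : (1%:M : 'M[R]_k.+2) != 0.
  by apply/negP => /eqP/matrixP/(_ ord0 ord0); rewrite !mxE eqxx /= => /eqP; rewrite oner_eq0.
have [a0|an0] := eqVneq alpha 0.
  have kerE : forall Z : 'M[R]_k.+2, lie_bracket X Z = 0 ->
      (mxvec Z <= eigenspace (opT_mx X) alpha)%MS.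
    move=> Z hZ; rewrite memE /opT hZ a0 scale0r /lie_bracket mulmx0 mul0mx subrr.
    by [].
  have [c hc] : exists c, X = c *: 1%:M.
    apply: dep; [apply: kerE | apply: kerE | exact: one0];
      by rewrite /lie_bracket ?mulmx1 ?mul1mx subrr.
  have [d hd] : exists d, delta_mx ord0 ord_max = d *: (1%:M : 'M[R]_k.+2).
    apply: dep; [apply: kerE | apply: kerE | exact: one0];
      rewrite /lie_bracket ?mulmx1 ?mul1mx ?subrr // hc scalemx1.
    by rewrite mul_scalar_mx mul_mx_scalar subrr.
  move/matrixP: hd => /(_ ord0 ord_max); rewrite !mxE /= !eqxx /= mulr0.
  by move/eqP; rewrite oner_eq0.
pose W := (lie_bracket X Y)^T.
have WE : (mxvec W <= eigenspace (opT_mx X) alpha)%MS by rewrite memE; apply/eqP/LE.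
have [c hc] := dep _ _ vE WE Y0.
have hskew := @Lskew _ _ X Y.
move: hskew; rewrite -/W hc -scalemxAl mxtraceZ => /eqP; rewrite mulf_eq0 => /orP [/eqP c0|].
  have W0 : W = 0 by rewrite hc c0 scale0r.
  have Z0 : lie_bracket X Y = 0 by rewrite -[lie_bracket X Y]trmxK -/W W0 trmx0.
  move: HY; rewrite /opT Z0 /lie_bracket mulmx0 mul0mx subrr => /esym/eqP.
  by rewrite scaler_eq0 (negbTE an0) (negbTE Y0).
by move/eqP/trAAT0/eqP; rewrite (negbTE Y0).
Qed.
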